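(* Let $(X,\|\cdot\|_X)$ be a Banach space, $n\in\mathbb{N}$, $\mathcal{K}\subset X$ compact and $\gamma>0$. Then there is a norm $\|\cdot\|_Y$ on $\mathbb{R}^n$ satisfying $$\max_j|y_j|\le\|y\|_Y\le\sum_{j=1}^n|y_j|\quad\text{for all } y=(y_1,\dots,y_n)\in\mathbb{R}^n,$$ such that $d_n^\gamma(\mathcal{K})_X=d^\gamma(\mathcal{K},Y)_X$.
   Context: For $k\ge1$ and a norm $\|\cdot\|_{Y_k}$ on $\mathbb{R}^k$ let $B_{Y_k}=\{y\in\mathbb{R}^k:\|y\|_{Y_k}\le1\}$. For $\mathcal{K}\subset X$ and $\gamma\ge0$, the fixed Lipschitz width is $d^\gamma(\mathcal{K},Y_k)_X=\inf_{\Phi}\sup_{f\in\mathcal{K}}\inf_{y\in B_{Y_k}}\|f-\Phi(y)\|_X$, the infimum being over all maps $\Phi:B_{Y_k}\to X$ with $\|\Phi(y)-\Phi(y')\|_X\le\gamma\|y-y'\|_{Y_k}$ for all $y,y'\in B_{Y_k}$. The Lipschitz width is $d_n^\gamma(\mathcal{K})_X=\inf_{1\le k\le n}\inf_{\|\cdot\|_{Y_k}}d^\gamma(\mathcal{K},Y_k)_X$, where the inner infimum is over all norms on $\mathbb{R}^k$. *)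

(* Defs.v *)
From HB Require Import structures.
From mathcomp Require Import all_boot all_order all_algebra.
From mathcomp Require Import all_classical all_reals all_analysis.
Set Implicit Arguments. Unset Strict Implicit. Unset Printing Implicit Defensive.
Import Order.TTheory GRing.Theory Num.Theory.
Import numFieldNormedType.Exports.
Local Open Scope classical_set_scope.
Local Open Scope ring_scope.

Definition is_norm (R : realType) (k : nat) (N : 'rV[R]_k -> R) : Prop :=
  [/\ forall y, 0 <= N y,
      forall y, N y = 0 -> y = 0,
      forall (a : R) y, N (a *: y) = `|a| * N y
    & forall y y', N (y + y') <= N y + N y'].

Definition unit_ball (R : realType) (k : nat) (N : 'rV[R]_k -> R) : set 'rV[R]_k :=
  [set y | N y <= 1].

Definition lip_on_ball (R : realType) (X : normedModType R) (k : nat)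
    (N : 'rV[R]_k -> R) (gamma : R) (Phi : 'rV[R]_k -> X) : Prop :=
  forall y y', unit_ball N y -> unit_ball N y' ->
    `|Phi y - Phi y'| <= gamma * N (y - y').

Definition fixed_lip_width (R : realType) (X : normedModType R) (K : set X)
    (gamma : R) (k : nat) (N : 'rV[R]_k -> R) : \bar R :=
  ereal_inf [set e | exists Phi : 'rV[R]_k -> X, lip_on_ball N gamma Phi /\
    e = ereal_sup [set s | exists2 f, K f &
          s = ereal_inf [set (`|f - Phi y|)%:E | y in unit_ball N]]].

Definition lip_width (R : realType) (X : normedModType R) (K : set X)
    (gamma : R) (n : nat) : \bar R :=
  ereal_inf [set e | exists k : nat, [/\ (1 <= k)%N, (k <= n)%N &
    exists N : 'rV[R]_k -> R, is_norm N /\ e = fixed_lip_width K gamma N]].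

(* Main.v *)
Require Import Defs.
From HB Require Import structures.
From mathcomp Require Import all_boot all_order all_algebra.
From mathcomp Require Import all_classical all_reals all_analysis.
Import Order.TTheory GRing.Theory Num.Theory.
Import numFieldNormedType.Exports.
Local Open Scope classical_set_scope.
Local Open Scope ring_scope.
Section Helpers.
Context {R : realType}.

Lemma normN0 {k} {N : 'rV[R]_k -> R} : is_norm N -> N 0 = 0.
Proof.
case=> _ _ hZ _; have := hZ 0 0; rewrite scale0r normr0 mul0r; exact.
Qed.

Lemma normNN k (N : 'rV[R]_k -> R) y : is_norm N -> N (- y) = N y.
Proof.
case=> _ _ hZ _; by rewrite -scaleN1r hZ normrN normr1 mul1r.
Qed.

Lemma normBC k (N : 'rV[R]_k -> R) x y : is_norm N -> N (x - y) = N (y - x).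
Proof. by move=> hN; rewrite -normNN // opprB. Qed.

Lemma norm_rev k (N : 'rV[R]_k -> R) x y : is_norm N -> N x - N y <= N (x - y).
Proof.
move=> hN; case: (hN) => _ _ _ hT.
rewrite lerBlDr; apply: le_trans (hT _ _); by rewrite subrK.
Qed.

Lemma norm_absB k (N : 'rV[R]_k -> R) x y : is_norm N -> `|N x - N y| <= N (x - y).
Proof.
move=> hN; rewrite ler_norml norm_rev // andbT.
by rewrite lerNl opprB normBC // norm_rev.
Qed.

Lemma norm_sum k (N : 'rV[R]_k -> R) p (f : 'I_p -> 'rV[R]_k) : is_norm N ->
  N (\sum_(i < p) f i) <= \sum_(i < p) N (f i).
Proof.
move=> hN; case: (hN) => _ _ _ hT.
elim/big_rec2: _ => [|i y1 y2 _ IH]; first by rewrite normN0.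
by apply: le_trans (hT _ _) _; rewrite lerD2l.
Qed.

Lemma transport (X : normedModType R) (K : set X) (gamma : R) k1 k2
  (N1 : 'rV[R]_k1 -> R) (N2 : 'rV[R]_k2 -> R) (P : 'rV[R]_k2 -> 'rV[R]_k1) (c : R) :
  0 <= gamma -> 0 <= c ->
  (forall y, unit_ball N2 y -> unit_ball N1 (P y)) ->
  (forall y y', unit_ball N2 y -> unit_ball N2 y' -> N1 (P y - P y') <= N2 (y - y')) ->
  (forall z, unit_ball N1 z -> exists2 y, unit_ball N2 y & N1 (P y - z) <= c) ->
  (fixed_lip_width K gamma N2 <= fixed_lip_width K gamma N1 + (gamma * c)%:E)%E.
Proof.
move=> g0 c0 PB PL Pc.
rewrite /fixed_lip_width -leeBlDr //.
apply: le_ereal_inf_tmp => _ [Phi [Lip ->]].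
rewrite leeBlDr //.
apply: (@le_trans _ _ (ereal_sup [set s | exists2 f, K f & s = ereal_inf
   [set (`|f - (Phi \o P) y|)%:E | y in unit_ball N2]])).
  apply: ereal_inf_le; eexists; last exact: lexx.
  exists (Phi \o P); split => //.
  move=> y y' By By' /=.
  apply: le_trans (Lip _ _ (PB _ By) (PB _ By')) _.
  by rewrite ler_wpM2l // PL.
apply: ge_ereal_sup => _ [f Kf ->].
apply: (@le_trans _ _ (ereal_inf [set (`|f - Phi z|)%:E | z in unit_ball N1]
   + (gamma * c)%:E)%E); last first.
  by apply: leeD2r; apply: ereal_sup_ubound; exists f.
rewrite -leeBlDr //; apply: le_ereal_inf_tmp => _ [z Bz <-]; rewrite leeBlDr //.
have [y By Hy] := Pc z Bz.
apply: ereal_inf_le; exists (`|f - Phi (P y)|)%:E; first by exists y.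
rewrite -EFinD lee_fin.
have -> : f - Phi (P y) = (f - Phi z) + (Phi z - Phi (P y)) by rewrite addrA subrK.
apply: le_trans (ler_normD _ _) _; rewrite lerD2l distrC.
apply: le_trans (Lip _ _ (PB _ By) Bz) _.
by rewrite ler_wpM2l.
Qed.

End Helpers.
Section Embed.
Variable R : realType.

Lemma norm_comb k l n (N1 : 'rV[R]_k -> R) (A : 'M[R]_(n, k)) (B : 'M[R]_(n, l)) :
  is_norm N1 -> (forall y : 'rV[R]_n, y *m A = 0 -> y *m B = 0 -> y = 0) ->
  is_norm (fun y : 'rV[R]_n => N1 (y *m A) + `|y *m B|).
Proof.
move=> hN hAB; case: (hN) => h0 hD hZ hT; split.
- by move=> y; rewrite addr_ge0.
- move=> y /eqP; rewrite paddr_eq0 // => /andP[/eqP /hD a].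
  by rewrite normr_eq0 => /eqP; apply: hAB.
- by move=> a y; rewrite -scalemxAl hZ -scalemxAl normrZ mulrDr.
- move=> y y'; rewrite !mulmxDl.
  apply: le_trans (lerD (hT _ _) (ler_normD _ _)) _.
  by rewrite addrACA.
Qed.

Definition Emb {k n} (kn : (k <= n)%N) : 'M[R]_(k, n) :=
  \matrix_(i, j) (widen_ord kn i == j)%:R.

Lemma Emb_tr {k n} (kn : (k <= n)%N) : Emb kn *m (Emb kn)^T = 1%:M.
Proof.
apply/matrixP => i i'; rewrite !mxE.
rewrite (bigD1 (widen_ord kn i)) //= big1 ?addr0.
  rewrite !mxE eqxx mul1r.
  have -> : (widen_ord kn i' == widen_ord kn i) = (i == i'); last by [].
  apply/eqP/eqP => [h|->//]; apply/val_inj; exact: (esym (congr1 val h)).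
by move=> j /negbTE hj; rewrite !mxE eq_sym hj mul0r.
Qed.

Lemma embed (X : normedModType R) (K : set X) (gamma : R) k n (kn : (k <= n)%N)
  (N : 'rV[R]_k -> R) : 0 <= gamma -> is_norm N ->
  exists N' : 'rV[R]_n -> R, is_norm N' /\
   (fixed_lip_width K gamma N' <= fixed_lip_width K gamma N)%E.
Proof.
move=> g0 hN.
pose E := Emb kn.
pose B : 'M[R]_n := 1%:M - E^T *m E.
have hB : forall y : 'rV[R]_n, y *m E^T = 0 -> y *m B = 0 -> y = 0.
  move=> y h1; rewrite /B mulmxBr mulmx1 mulmxA h1 mul0mx subr0; exact.
exists (fun y : 'rV[R]_n => N (y *m E^T) + `|y *m B|); split; first exact: norm_comb.
have := @transport R X K gamma k n N (fun y : 'rV[R]_n => N (y *m E^T) + `|y *m B|)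
   (fun y => y *m E^T) 0 g0 (lexx 0).
rewrite mulr0 adde0; apply.
- move=> y; rewrite /unit_ball /= => Hy; apply: le_trans Hy.
  by rewrite lerDl.
- move=> y y' _ _; rewrite -mulmxBl lerDl //.
- move=> z Bz; exists (z *m E).
    rewrite /unit_ball /= -mulmxA Emb_tr mulmx1.
    rewrite /B mulmxBr mulmx1 !mulmxA -(mulmxA z) Emb_tr mulmx1 subrr normr0 addr0.
    exact: Bz.
  by rewrite -mulmxA Emb_tr mulmx1 subrr normN0.
Qed.

End Embed.
From mathcomp Require Import ring lra.
Section MxHelpers.
Context {R : realType}.

Lemma entry_le_norm m n (x : 'M[R]_(m, n)) i j : `|x i j| <= `|x|.
Proof.
have -> : `|x| = mx_norm x by [].
rewrite mx_normrE; apply/bigmax_geP; right; by exists (i, j).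
Qed.

Lemma norm_le_entries m n (x : 'M[R]_(m, n)) c : 0 <= c ->
  (forall i j, `|x i j| <= c) -> `|x| <= c.
Proof.
move=> c0 h; have -> : `|x| = mx_norm x by [].
rewrite mx_normrE; apply/bigmax_leP; split => // [[i j]] _; exact: h.
Qed.

Lemma lip_cont p (f : 'rV[R]_p -> R) C : 0 <= C ->
  (forall x y, `|f x - f y| <= C * `|x - y|) -> continuous f.
Proof.
move=> C0 hf x s /= /(nbhs_ballP (f x)) [e e0 es].
have C1 : 0 < C + 1 by lra.
have e1 : 0 < e / (C + 1) by rewrite divr_gt0.
apply/nbhs_ballP; exists (e / (C + 1)) => // y.
rewrite mx_norm_ball /ball_ => hy; apply: es.
rewrite -ball_normE /ball_ /=.
apply: le_lt_trans (hf x y) _.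
have h1 : C * `|x - y| <= (C + 1) * `|x - y| by rewrite ler_wpM2r // lerDl.
apply: le_lt_trans h1 _; by rewrite mulrC -ltr_pdivlMr.
Qed.

End MxHelpers.
From mathcomp Require Import finmap.
Section Limit.
Variable R : realType.

Definition mxn {n} (y : 'rV[R]_n) := \big[Num.max/0]_(j < n) `|y ord0 j|.
Definition sm {n} (y : 'rV[R]_n) := \sum_(j < n) `|y ord0 j|.
Definition good {n} (N : 'rV[R]_n -> R) :=
  is_norm N /\ forall y, mxn y <= N y /\ N y <= sm y.

Lemma mxn_ge n (y : 'rV[R]_n) j : `|y ord0 j| <= mxn y.
Proof. by apply/bigmax_geP; right; exists j. Qed.

Lemma mxn_ge0 n (y : 'rV[R]_n) : 0 <= mxn y.
Proof. by apply/bigmax_geP; left. Qed.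

Lemma norm_le_mxn n (y : 'rV[R]_n) : `|y| <= mxn y.
Proof.
apply: norm_le_entries; first exact: mxn_ge0.
by move=> i j; rewrite (ord1 i); exact: mxn_ge.
Qed.

Lemma sm_le n (y : 'rV[R]_n) : sm y <= n%:R * `|y|.
Proof.
rewrite /sm; apply: le_trans (_ : \sum_(j < n) `|y| <= _).
  by apply: ler_sum => j _; exact: entry_le_norm.
by rewrite sumr_const card_ord mulr_natl.
Qed.

Lemma mxn0 n (y : 'rV[R]_n) : mxn y <= 0 -> y = 0.
Proof.
move=> h; apply/rowP => j; apply/eqP; rewrite mxE -normr_le0.
by apply: le_trans h; exact: mxn_ge.
Qed.

Lemma lim_le {U : set_system nat} {UU : ProperFilter U} (u v : nat -> R) (p q : R) :
  u @ U --> p -> v @ U --> q -> (forall m, u m <= v m) -> p <= q.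
Proof.
move=> hu hv huv; rewrite -subr_ge0.
apply: (cvgr_to_ge (cvgB hv hu)); apply: nearW => m /=.
by rewrite subr_ge0.
Qed.

Lemma lim_eq {U : set_system nat} {UU : ProperFilter U} (u v : nat -> R) (p q : R) :
  u @ U --> p -> v @ U --> q -> (forall m, u m = v m) -> p = q.
Proof.
move=> hu hv huv; apply/eqP; rewrite eq_le.
apply/andP; split.
  by apply: (@lim_le U UU u v p q hu hv) => m; rewrite huv.
by apply: (@lim_le U UU v u q p hv hu) => m; rewrite huv.
Qed.

Lemma ulim (U : set_system nat) (UU : UltraFilter U) (u : nat -> R) C :
  (forall m, 0 <= u m <= C) -> exists p : R, u @ U --> p.
Proof.
move=> hu.
have hU : (u @ U) `[0, C]%classic by apply: nearW => m; rewrite /= in_itv /=.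
have [p [_ clp]] := @segment_compact R 0 C (u @ U) _ hU.
exists p => B /= Bp.
case: (in_ultra_setVsetC (u @^-1` B) UU) => // hC; exfalso.
have [r [/= r1 r2]] := clp (~` B) B hC Bp.
exact: r1 r2.
Qed.

Lemma limit_norms n (Ns : nat -> 'rV[R]_n -> R) : (forall m, good (Ns m)) ->
  exists N, good N /\ forall eta, 0 < eta -> forall m0, exists m, (m0 <= m)%N /\
    forall y, Ns m y <= (1 + eta) * N y /\ (1 - eta) * N y <= Ns m y.
Proof.
move=> hNs.
have [U [UU sub]] := @ultraFilterLemma nat \oo _.
have UP : ProperFilter U by case: UU.
have UF : Filter U by case: UP.
have : forall y, exists p : R, (fun m => Ns m y) @ U --> p.
  move=> y; apply: (@ulim U UU _ (sm y)) => m.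
  have [[h0 _ _ _] hb] := hNs m; by rewrite h0 (hb y).2.
move=> /choice [N cvN].
have nrm m : is_norm (Ns m) by case: (hNs m).
have Nlb y : mxn y <= N y.
  apply: (cvgr_to_ge (cvN y)); apply: nearW => m; exact: ((hNs m).2 y).1.
have Nub y : N y <= sm y.
  apply: (cvgr_to_le (cvN y)); apply: nearW => m; exact: ((hNs m).2 y).2.
have NZ a y : N (a *: y) = `|a| * N y.
  apply: (@lim_eq U _ _ _ _ _ (cvN (a *: y)) (@cvgMl_tmp _ _ U _ _ `|a| _ (cvN y))) => m.
  by case: (nrm m) => _ _ -> _.
have NT y y' : N (y + y') <= N y + N y'.
  apply: (@lim_le U _ _ _ _ _ (cvN (y + y')) (cvgD (cvN y) (cvN y'))) => m /=.
  by case: (nrm m) => _ _ _ ->.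
have nN : is_norm N.
  split => //.
  - by move=> y; apply: le_trans (Nlb y); exact: mxn_ge0.
  - by move=> y Ny0; apply: mxn0; rewrite -Ny0.
have gN : good N by split.
exists N; split => // eta eta0 m0.
pose d := eta / (2 * n%:R + 1).
have n0 : 0 <= n%:R :> R by exact: ler0n.
have d0 : 0 < d by rewrite divr_gt0 //; lra.
pose S := [set x : 'rV[R]_n | `|x| <= 1].
have cS : compact S.
  apply: bounded_closed_compact.
    exists 1; split; first exact: num_real.
    by move=> M M1 x Sx /=; apply: le_trans Sx (ltW M1).
  rewrite (_ : S = Num.norm @^-1` [set r : R | r <= 1]) //.
  apply: preimage_closed => [x _|]; [exact: norm_continuous | exact: closed_le].
have := cS; rewrite compact_cover => /(_ _ S (fun g => ball g d)) [].
- by move=> g _; exact: ball_open.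
- by move=> x Sx; exists x => //; exact: ballxx.
move=> D' D'S cov.
have hU : U [set m | (m0 <= m)%N /\ forall g : 'rV[R]_n, [set` D'] g -> `|N g - Ns m g| < d].
  apply: filterI.
    by apply: sub; exists m0.
  have := @filter_bigI _ _ D' (fun g => [set m | `|N g - Ns m g| < d]) U UF
    (fun g _ => @cvgr_dist_lt _ _ _ U _ (fun m => Ns m g) (N g) (cvN g) d d0).
  move=> H; have HH : (\bigcap_(i in [set` D']) [set m | `|N i - Ns m i| < d]) `<=`
    [set m | forall g : 'rV[R]_n, [set` D'] g -> `|N g - Ns m g| < d].
    by move=> m h g gD; exact: h.
  exact: (filterS HH (H UF)).
have [m [m0m hm]] := filter_ex hU.
exists m; split => // y.
case: (eqVneq y 0) => [->|y0].
  by rewrite (normN0 (nrm m)) (normN0 nN) !mulr0; split.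
pose t := `|y|; have t0 : 0 < t by rewrite normr_gt0.
pose x := t^-1 *: y.
have yx : y = t *: x by rewrite /x scalerA divff ?gt_eqF // scale1r.
have nx : `|x| = 1 by rewrite /x normrZ normfV normr_id mulVf // gt_eqF.
have [g gD bg] : exists2 g, [set` D'] g & ball g d x.
  have Sx : S x by rewrite /S /= nx.
  have [g gD bg] := cov x Sx.
  by exists g.
have gx : `|g - x| < d by move: bg; rewrite mx_norm_ball /ball_.
have dist (M : 'rV[R]_n -> R) : good M -> `|M x - M g| <= n%:R * d.
  move=> [hM hb]; apply: le_trans (@norm_absB _ _ _ x g hM) _.
  apply: le_trans (hb _).2 _; apply: le_trans (sm_le _ _) _.
  by rewrite ler_wpM2l // -normrN opprB ltW.
have := dist _ (hNs m); rewrite ler_norml => /andP[e1a e1b].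
have := dist _ gN; rewrite ler_norml => /andP[e2a e2b].
have := hm g gD; rewrite ltr_norml => /andP[e3a e3b].
have dd : (2 * n%:R + 1) * d = eta by rewrite /d mulrC divfK //; lra.
have Nx1 : 1 <= N x by rewrite -nx; apply: le_trans (Nlb x); exact: norm_le_mxn.
have [_ _ hZm _] := nrm m.
rewrite yx hZm NZ gtr0_norm //.
have dd' : 2 * (n%:R * d) + d = eta by rewrite -dd; ring.
have h1 : Ns m x <= N x + eta by lra.
have h2 : N x - eta <= Ns m x by lra.
have h3 : eta <= eta * N x by rewrite ler_peMr // ltW.
have h4 : Ns m x <= (1 + eta) * N x by lra.
have h5 : (1 - eta) * N x <= Ns m x by lra.
split.
  by rewrite mulrCA ler_wpM2l // ltW.
by rewrite mulrCA ler_wpM2l // ltW.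
Qed.

End Limit.
Section Auerbach.
Variable R : realType.

Lemma norm_upper {n} {N : 'rV[R]_n -> R} : is_norm N ->
  exists2 C, 0 <= C & forall x, N x <= C * `|x|.
Proof.
move=> hN; case: (hN) => h0 _ hZ _.
exists (\sum_(j < n) N (delta_mx 0 j)); first by apply: sumr_ge0.
move=> x; rewrite {1}(row_sum_delta x).
apply: le_trans (@norm_sum _ _ _ _ _ hN) _.
rewrite mulr_suml; apply: ler_sum => j _; rewrite hZ mulrC ler_wpM2l //.
exact: entry_le_norm.
Qed.

Lemma norm_lower n (N : 'rV[R]_n -> R) : (0 < n)%N -> is_norm N ->
  exists2 c, 0 < c & forall x, c * `|x| <= N x.
Proof.
move=> n0 hN; case: (hN) => h0 hD hZ hT.
have [C C0 hC] := norm_upper hN.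
have Nc : continuous N.
  apply: (@lip_cont _ _ _ C C0) => x y.
  apply: le_trans (@norm_absB _ _ _ x y hN) _; exact: hC.
pose S1 := [set x : 'rV[R]_n | `|x| = 1].
have cS : compact S1.
  apply: bounded_closed_compact.
    exists 1; split; first exact: num_real.
    by move=> M M1 x Sx /=; rewrite Sx ltW.
  rewrite (_ : S1 = (Num.norm @^-1` [set r : R | r <= 1]) `&`
                  (Num.norm @^-1` [set r : R | 1 <= r])).
    apply: closedI; apply: preimage_closed => [x _|]; try exact: norm_continuous.
      exact: closed_le.
    exact: closed_ge.
  apply/seteqP; split => x /=; first by move=> ->.
  by case=> h1 h2; apply/eqP; rewrite eq_le h1 h2.
have x1 : S1 (const_mx 1).
  rewrite /S1 /=; apply/eqP; rewrite eq_le; apply/andP; split.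
    by apply: norm_le_entries => // i j; rewrite mxE normr1.
  by have := @entry_le_norm _ 1 n (const_mx (1:R)) 0 (Ordinal n0); rewrite mxE normr1.
have [x0 Sx0 hx0] := @EVT_min_rV R n N S1 (ex_intro _ _ x1) cS
   (continuous_subspaceT (fun x => Nc x)).
have Sx0' : `|x0| = 1 := set_mem Sx0.
exists (N x0).
  have : N x0 != 0 by apply/eqP => /hD x00; move: Sx0'; rewrite x00 normr0 => /eqP; rewrite eq_sym oner_eq0.
  by rewrite lt_def => -> /=.
move=> x; case: (eqVneq x 0) => [->|x0n]; first by rewrite normr0 mulr0.
have t0 : 0 < `|x| by rewrite normr_gt0.
have Sy : S1 (`|x|^-1 *: x) by rewrite /S1 /= normrZ normfV normr_id mulVf // gt_eqF.
have := hx0 _ (mem_set Sy); rewrite hZ normfV normr_id.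
by rewrite ler_pdivlMl // mulrC.
Qed.

End Auerbach.
From mathcomp Require Import perm.
Section Auerbach2.
Variable R : realType.

Lemma row_vec_mx_norm n (u : 'rV[R]_(n * n)) i : `|row i (vec_mx u)| <= `|u|.
Proof.
apply: norm_le_entries => // a j; rewrite !mxE.
exact: entry_le_norm.
Qed.

Lemma det_cont n : continuous (fun v : 'rV[R]_(n * n) => \det (vec_mx v)).
Proof.
have -> : (fun v : 'rV[R]_(n * n) => \det (vec_mx v)) =
  (fun v => \sum_(s : 'S_n) ((-1) ^+ s * \prod_(i < n) v 0 (mxvec_index i (s i)))).
  apply: funext => v; rewrite /determinant; apply: eq_bigr => s _.
  by congr (_ * _); apply: eq_bigr => i _; rewrite mxE.
apply: continuous_big => [|s _]; first exact: add_continuous.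
have hp : forall s : 'S_n,
    continuous (fun x : 'rV[R]_(n * n) => \prod_(i < n) x 0 (mxvec_index i (s i))).
  move=> s'; apply: continuous_big => [|i _]; first exact: mul_continuous.
  exact: coord_continuous.
move=> v.
have NF : ProperFilter (nbhs v) by apply: nbhs_pfilter.
have NF' : Filter (nbhs v) by case: NF.
exact: (@cvgMl_tmp _ _ (nbhs v) NF' _ _ _ (hp s v)).
Qed.

End Auerbach2.
Section Auerbach3.
Variable R : realType.

Lemma det_row_replace n (M : 'M[R]_n) (x : 'rV[R]_n) i :
  \det (\matrix_(a, b) if a == i then x 0 b else M a b) = (x *m \adj M) 0 i.
Proof.
rewrite (expand_det_row _ i) mxE; apply: eq_bigr => j _.
rewrite !mxE eqxx; congr (_ * _).
rewrite /cofactor; congr (_ * \det _); apply/matrixP => a b; rewrite !mxE.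
by rewrite eq_sym (negbTE (neq_lift _ _)).
Qed.

Lemma auerbach n (N : 'rV[R]_n -> R) : (0 < n)%N -> is_norm N ->
  exists M : 'M[R]_n, M \in unitmx /\ @good R n (fun y => N (y *m M)).
Proof.
move=> n0 hN; case: (hN) => h0 hD hZ hT.
have [C C0 hC] := @norm_upper R n N hN.
have [c c0 hc] := @norm_lower R n N n0 hN.
pose g (i : 'I_n) (v : 'rV[R]_(n * n)) := N (row i (vec_mx v)).
pose A := \bigcap_(i in [set: 'I_n]) (g i @^-1` [set r : R | r <= 1]).
have gc i : continuous (g i).
  apply: (@lip_cont _ _ _ C C0) => v w.
  apply: le_trans (@norm_absB _ _ _ _ _ hN) _.
  have -> : row i (vec_mx v) - row i (vec_mx w) = row i (vec_mx (v - w)).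
    by apply/rowP => j; rewrite !mxE.
  apply: le_trans (hC _) _; rewrite ler_wpM2l //; exact: row_vec_mx_norm.
have cA : compact A.
  apply: bounded_closed_compact.
    exists c^-1; split; first exact: num_real.
    move=> M M1 v Av /=; apply: le_trans (ltW M1).
    apply: norm_le_entries => [|a k]; first by rewrite invr_ge0 ltW.
    rewrite (ord1 a); case/mxvec_indexP: k => i j.
    have := Av i I; rewrite /g /= => hv.
    have : `|row i (vec_mx v) 0 j| <= c^-1.
      apply: le_trans (@entry_le_norm _ _ _ (row i (vec_mx v)) 0 j) _.
      by rewrite -[c^-1]mulr1 ler_pdivlMl // (le_trans (hc _) hv).
    by rewrite !mxE.
  apply: closed_bigI => i _; apply: preimage_closed => [v _|]; last exact: closed_le.
  exact: gc.
pose f (v : 'rV[R]_(n * n)) := \det (vec_mx v).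
pose r := (C + 1)^-1.
have r0 : 0 < r by rewrite invr_gt0; lra.
have rC : r * C <= 1.
  by rewrite /r mulrC ler_pdivrMr; lra.
have A0 : A (mxvec (r%:M)).
  move=> i _ /=; rewrite /g mxvecK.
  apply: le_trans (hC _) _; apply: le_trans _ rC; rewrite mulrC ler_wpM2r //.
  apply: norm_le_entries => [|a b]; first exact: ltW.
  rewrite !mxE; case: (_ == _); rewrite ?mulr1n ?mulr0n ?normr0 ?gtr0_norm //.
  exact: ltW.
have [vm Avm hvm] := @EVT_max_rV R _ f A (ex_intro _ _ A0) cA
  (continuous_subspaceT (@det_cont R n)).
pose M := vec_mx vm.
have rowM i : N (row i M) <= 1 by have := set_mem Avm i I.
have dM0 : 0 < \det M.
  have := hvm _ (mem_set A0); rewrite /f mxvecK det_scalar.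
  by apply: lt_le_trans; rewrite exprn_gt0.
have key z i : N (z *m M) <= 1 -> z 0 i <= 1.
  move=> hz.
  pose M' := \matrix_(a, b) if a == i then (z *m M) 0 b else M a b.
  have AM' : A (mxvec M').
    move=> a _ /=; rewrite /g mxvecK.
    case: (eqVneq a i) => [->|ai].
      by rewrite (_ : row i M' = z *m M) //; apply/rowP => b; rewrite !mxE eqxx.
    by rewrite (_ : row a M' = row a M) //; apply/rowP => b; rewrite !mxE (negbTE ai).
  have := hvm _ (mem_set AM'); rewrite /f mxvecK det_row_replace.
  rewrite -mulmxA mul_mx_adj mul_mx_scalar mxE.
  by rewrite -{2}(mulr1 (\det M)) ler_pM2l.
have Mu : M \in unitmx by rewrite unitmxE unitfE gt_eqF.
exists M; split => //; split; [split|] => [y|y|a y|y y'|y].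
- exact: h0.
- by move/hD => yM0; rewrite -(mulmxK Mu y) yM0 mul0mx.
- by rewrite -scalemxAl hZ.
- by rewrite mulmxDl hT.
split.
  apply/bigmax_leP; split; first exact: h0.
  move=> i _.
  case: (eqVneq (y *m M) 0) => [yM0|yM0].
    have -> : y = 0 by rewrite -(mulmxK Mu y) yM0 mul0mx.
    by rewrite mxE normr0 h0.
  have t0 : 0 < N (y *m M) by rewrite lt_def h0 andbT; apply/eqP => /hD; apply/eqP.
  have hzs (s : R) : `|s| = 1 -> s * y 0 i <= N (y *m M).
    move=> s1.
    have := key ((s / N (y *m M)) *: y) i.
    rewrite -scalemxAl hZ normrM s1 mul1r normfV gtr0_norm // mulVf ?gt_eqF //.
    move=> /(_ (lexx 1)); rewrite mxE mulrAC ler_pdivrMr //.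
    by rewrite mul1r.
  rewrite ler_norml; apply/andP; split.
    by rewrite lerNl -mulN1r; apply: hzs; rewrite normrN normr1.
  by rewrite -(mul1r (y 0 i)); apply: hzs; rewrite normr1.
rewrite mulmx_sum_row.
apply: le_trans (@norm_sum _ _ _ _ _ hN) _.
apply: ler_sum => i _; rewrite hZ -{2}(mulr1 `|y 0 i|) ler_wpM2l //.
Qed.

End Auerbach3.
Theorem theorem3p3 (R : realType) (X : completeNormedModType R) (n : nat)
    (K : set X) (gamma : R) :
  (0 < n)%N -> compact K -> 0 < gamma ->
  exists N : 'rV[R]_n -> R,
    [/\ is_norm N,
        forall y : 'rV[R]_n,
          \big[Num.max/0]_(j < n) `|y ord0 j| <= N y /\
          N y <= \sum_(j < n) `|y ord0 j|
      & lip_width K gamma n = fixed_lip_width K gamma N].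
Proof.
move=> n0 cK g0.
have g0' : 0 <= gamma := ltW g0.
have reduce : forall k (kn : (k <= n)%N) (N : 'rV[R]_k -> R), is_norm N ->
    exists2 N' : 'rV[R]_n -> R, @good R n N' &
      (fixed_lip_width K gamma N' <= fixed_lip_width K gamma N)%E.
  move=> k kn N hN.
  have [N1 [hN1 F1]] := @embed R X K gamma k n kn N g0' hN.
  have [M [Mu gM]] := @auerbach R n N1 n0 hN1.
  exists (fun y => N1 (y *m M)) => //.
  apply: le_trans F1.
  have := @transport R X K gamma n n N1 (fun y => N1 (y *m M)) (fun y => y *m M)
    0 g0' (lexx 0).
  rewrite mulr0 adde0; apply.
  - by [].
  - by move=> y y' _ _; rewrite mulmxBl.
  - move=> z Bz; exists (z *m invmx M); first by rewrite /unit_ball /= mulmxKV.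
    by rewrite mulmxKV // subrr normN0.
have inL : forall N : 'rV[R]_n -> R, is_norm N ->
    (lip_width K gamma n <= fixed_lip_width K gamma N)%E.
  by move=> N hN; apply: ereal_inf_lbound; exists n; split => //; exists N.
have below : forall r : R, (lip_width K gamma n < r%:E)%E ->
    exists N : 'rV[R]_n -> R, @good R n N /\ (fixed_lip_width K gamma N < r%:E)%E.
  move=> r Lr; have [_ [k [k1 kn [N [hN ->]]]] Fr] := ereal_inf_lt Lr.
  have [N' gN' FN'] := reduce k kn N hN; exists N'; split => //.
  exact: le_lt_trans FN' Fr.
have normr_norm : is_norm (fun y : 'rV[R]_n => `|y|).
  split => [y|y|a y|y y']; [exact: normr_ge0 | exact: normr0_eq0 | exact: normrZ | exact: ler_normD].
case: (eqVneq (lip_width K gamma n) +oo%E) => [Lp|Lnp].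
  have [M [_ [gM hb]]] := @auerbach R n _ n0 normr_norm.
  exists (fun y => `|y *m M|); split; [exact: gM | by move=> y; exact: hb y | ].
  by apply/le_anti/andP; split; [exact: inL | rewrite Lp leey].
pose r (m : nat) : R := if lip_width K gamma n is w%:E then w + (m.+1%:R)^-1 else - (m%:R).
have Lr m : (lip_width K gamma n < (r m)%:E)%E.
  rewrite /r; move: Lnp; case: (lip_width K gamma n) => [w|//|] _.
    by rewrite lte_fin ltrDl invr_gt0.
  by rewrite ltNyr.
have [Ns hNs] := choice (fun m => below (r m) (Lr m)).
have [N [gN appr]] := @limit_norms R n Ns (fun m => (hNs m).1).
exists N; split; [exact: gN.1 | by move=> y; exact: (gN.2 y) | ].
have hN := gN.1.
have step : forall eta, 0 < eta -> eta < 1 -> forall m0, exists2 m, (m0 <= m)%N &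
    (fixed_lip_width K gamma N <= (r m + gamma * (2 * eta))%:E)%E.
  move=> eta e0 e1 m0; have [m [m0m hm]] := appr eta e0 m0; exists m => //.
  have hNm := (hNs m).1.1.
  case: (hNm) => hm0 _ hZ _.
  case: (hN) => _ _ hZN _.
  have e1' : 0 < 1 + eta by lra.
  apply: (@le_trans _ _ (fixed_lip_width K gamma (Ns m) + (gamma * (2 * eta))%:E)%E); last first.
    by rewrite EFinD; apply: leeD2r; exact: ltW (hNs m).2.
  apply: (@transport R X K gamma n n (Ns m) N (fun y => (1 + eta)^-1 *: y) (2 * eta) g0').
  - lra.
  - move=> y; rewrite /unit_ball /= => Ny; rewrite hZ gtr0_norm ?invr_gt0 //.
    rewrite ler_pdivrMl // mulr1; apply: le_trans (hm y).1 _.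
    by rewrite -{2}(mulr1 (1 + eta)) ler_wpM2l // ltW.
  - move=> y y' _ _; rewrite -scalerBr hZ gtr0_norm ?invr_gt0 //.
    by rewrite ler_pdivrMl // (hm _).1.
  - move=> z Bz; exists ((1 - eta) *: z).
      rewrite /unit_ball /= hZN ger0_norm; last by lra.
      by apply: le_trans (hm z).2 Bz.
    rewrite scalerA -{2}(scale1r z) -scalerBl hZ.
    have -> : (1 + eta)^-1 * (1 - eta) - 1 = - (2 * eta / (1 + eta)).
      by field; rewrite gt_eqF.
    rewrite normrN ger0_norm; last by rewrite divr_ge0 //; lra.
    apply: le_trans (_ : 2 * eta / (1 + eta) * 1 <= _).
      by rewrite ler_wpM2l // divr_ge0 //; lra.
    rewrite mulr1 ler_pdivrMr //; nra.
case hL : (lip_width K gamma n) => [w| |].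
- apply/le_anti/andP; split; first by rewrite -hL; exact: inL hN.
  apply/lee_addgt0Pr => e e0.
  pose eta := e / (4 * (gamma + e)).
  have ge : 0 < gamma + e by lra.
  have eta0 : 0 < eta by rewrite divr_gt0 //; lra.
  have eta1 : eta < 1 by rewrite ltr_pdivrMr; lra.
  have eg : gamma * (2 * eta) <= e / 2.
    have -> : gamma * (2 * eta) = (gamma / (gamma + e)) * (e / 2).
      by rewrite /eta; field; rewrite gt_eqF.
    rewrite -{2}(mul1r (e / 2)); apply: ler_wpM2r; first lra.
    by rewrite ler_pdivrMr //; lra.
  pose m0 := Num.Def.trunc (2 / e).
  have hm0 : 2 / e < (m0.+1)%:R := truncnS_gt _.
  have [m m0m hF] := step eta eta0 eta1 m0.
  apply: le_trans hF _; rewrite lee_fin /r hL.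
  have i1 : (m.+1%:R)^-1 <= e / 2.
    have h : 2 / e < m.+1%:R by apply: lt_le_trans hm0 _; rewrite ler_nat ltnS.
    move: h; rewrite ltr_pdivrMr // => h.
    rewrite -[_^-1]mulr1 ler_pdivrMl ?ltr0Sn //; lra.
  rewrite -addrA lerD2l; apply: le_trans (lerD i1 eg) _.
  by rewrite -splitr.
- by move: Lnp; rewrite hL.
- apply/esym; case hF : (fixed_lip_width K gamma N) => [a| |] //.
  + pose m0 := (Num.Def.trunc (`|a| + gamma)).+1.
    have hm0 : `|a| + gamma < m0%:R := truncnS_gt _.
    have h12 : (0 : R) < 1 / 2 by lra.
    have h12' : (1 / 2 : R) < 1 by lra.
    have [m m0m hm] := step (1 / 2) h12 h12' m0.
    move: hm; rewrite hF /r hL lee_fin => hm.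
    have hmm : m0%:R <= m%:R :> R by rewrite ler_nat.
    have ha : - a <= `|a| by rewrite -normrN ler_norm.
    exfalso; clear - hm hmm ha hm0 g0; lra.
  + have h12 : (0 : R) < 1 / 2 by lra.
    have h12' : (1 / 2 : R) < 1 by lra.
    have [m _ hm] := step (1 / 2) h12 h12' 0%N.
    by move: hm; rewrite hF.
Qed.
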